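(* Let $\mathcal{D}=(\mathcal{P},\mathcal{B},\mathcal{I})$ be a quasi-symmetric $(v,b,r,k,\lambda_1,0)$ SPBIBD of type $(k-1,t)$ with intersection numbers $x=0$ and $y=1$, let $\Gamma$ be its incidence graph, and assume $k\ge3$. Then: (i) $\Gamma$ is almost $2$-$\mathcal{P}$-homogeneous if and only if $\mathcal{D}$ is a generalized quadrangle; (ii) $\Gamma$ is not $2$-$\mathcal{P}$-homogeneous.
   Context: A design $\mathcal{D}=(\mathcal{P},\mathcal{B},\mathcal{I})$ is an incidence structure with $|\mathcal{P}|=v$, $|\mathcal{B}|=b$, every block incident with exactly $k$ points and every point with exactly $r$ blocks; standing assumptions: $v>k$ and $r<b$. $(p,B)$ is a flag if $p\in B$, a non-flag otherwise. $\mathcal{D}$ is a $(v,b,r,k,\lambda_1,\lambda_2)$ SPBIBD of type $(s,t)$ if (i) any two distinct points are together in exactly $\lambda_1$ or exactly $\lambda_2$ blocks; (ii) for every flag $(p,B)$, the number of points of $B$ other than $p$ lying with $p$ in exactly $\lambda_1$ blocks is $s$; (iii) for every non-flag $(p,B)$, the number of points of $B$ lying with $p$ in exactly $\lambda_1$ blocks is $t$. Quasi-symmetric with intersection numbers $x<y$: any two distinct blocks share exactly $x$ or $y$ points, both values occurring. A partial geometry is such a design in which any two points are together in at most one block and there is a constant $t'$ ($1\le t'\le r$, $1\le t'\le k$) such that for every non-flag $(p,B)$ exactly $t'$ blocks are incident with $p$ and meet $B$; it is a generalized quadrangle if $t'=1$. The incidence graph is the bipartite graph on $\mathcal{P}\cup\mathcal{B}$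 with $p\sim B$ iff $p\in B$. $\Gamma_i(u)$ is the set of vertices at distance $i$ from $u$, $\Gamma(u)=\Gamma_1(u)$. For a $(Y,Y')$-bipartite graph in which every vertex of $Y$ has eccentricity $D\ge3$: it is almost $2$-$Y$-homogeneous if for each $1\le i\le D-2$ the number $|\Gamma(x)\cap\Gamma(y)\cap\Gamma_{i-1}(z)|$ is the same for all $x\in Y$, $y\in\Gamma_2(x)$, $z\in\Gamma_i(x)\cap\Gamma_i(y)$; it is $2$-$Y$-homogeneous if this holds for each $1\le i\le D-1$. *)

(* Defs.v *)
From mathcomp Require Import all_boot.
Set Implicit Arguments. Unset Strict Implicit. Unset Printing Implicit Defensive.

Section Designs.
Variables (P B : finType) (inc : P -> B -> bool).

Definition lam (p q : P) : nat := #|[set B0 | inc p B0 && inc q B0]|.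
Definition bmeet (B1 B2 : B) : nat := #|[set p | inc p B1 && inc p B2]|.

Definition is_design (v b r k : nat) : Prop :=
  [/\ #|P| = v, #|B| = b,
      (forall B0 : B, #|[set p | inc p B0]| = k),
      (forall p : P, #|[set B0 | inc p B0]| = r) &
      (k < v /\ r < b)].

Definition is_SPBIBD (v b r k l1 l2 s t : nat) : Prop :=
  [/\ is_design v b r k,
      (forall p q : P, p != q -> lam p q = l1 \/ lam p q = l2),
      (forall (p : P) (B0 : B), inc p B0 ->
          #|[set q | [&& inc q B0, q != p & lam p q == l1]]| = s) &
      (forall (p : P) (B0 : B), ~~ inc p B0 ->
          #|[set q | inc q B0 && (lam p q == l1)]| = t)].

Definition quasi_symmetric (x y : nat) : Prop :=
  [/\ x < y,
      (forall B1 B2 : B, B1 != B2 -> bmeet B1 B2 = x \/ bmeet B1 B2 = y),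
      (exists B1 B2 : B, B1 != B2 /\ bmeet B1 B2 = x) &
      (exists B1 B2 : B, B1 != B2 /\ bmeet B1 B2 = y)].

Definition is_partial_geometry (v b r k t' : nat) : Prop :=
  [/\ is_design v b r k,
      (forall p q : P, p != q -> lam p q <= 1),
      1 <= t' <= r, 1 <= t' <= k &
      (forall (p : P) (B0 : B), ~~ inc p B0 ->
         #|[set B1 | inc p B1 && [exists q, inc q B1 && inc q B0]]| = t')].

Definition is_GQ (v b r k : nat) : Prop := is_partial_geometry v b r k 1.

Definition inc_graph : rel (P + B)%type := fun u w =>
  match u, w with
  | inl p, inr B0 => inc p B0
  | inr B0, inl p => inc p B0
  | _, _ => false
  end.

Definition point_vertices : {set (P + B)%type} :=
  [set u | if u is inl _ then true else false].

End Designs.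

Section Graphs.
Variables (T : finType) (e : rel T).

Fixpoint reach (n : nat) (u w : T) : bool :=
  match n with
  | 0 => u == w
  | n'.+1 => [exists z, e u z && reach n' z w]
  end.

Definition Gam (i : nat) (u : T) : {set T} :=
  [set w | reach i u w && [forall j : 'I_i, ~~ reach j u w]].

Definition nbr (u : T) : {set T} := [set w | e u w].

Definition ecc_is (u : T) (D : nat) : Prop :=
  (forall w, exists2 i, i <= D & w \in Gam i u) /\ (exists w, w \in Gam D u).

Definition hom_cond (Y : {set T}) (m : nat) : Prop :=
  forall i, 1 <= i <= m -> exists c : nat,
    forall x y z, x \in Y -> y \in Gam 2 x -> z \in Gam i x -> z \in Gam i y ->
      #|nbr x :&: nbr y :&: Gam i.-1 z| = c.

Definition almost_2_hom (Y : {set T}) : Prop :=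
  exists D, 3 <= D /\ (forall x, x \in Y -> ecc_is x D) /\ hom_cond Y (D - 2).

Definition two_hom (Y : {set T}) : Prop :=
  exists D, 3 <= D /\ (forall x, x \in Y -> ecc_is x D) /\ hom_cond Y (D - 1).

End Graphs.

(* Main.v *)
Require Import Defs.
From mathcomp Require Import all_boot zify.
Set Implicit Arguments. Unset Strict Implicit. Unset Printing Implicit Defensive.

Section G.
Variables (P B : finType) (inc : P -> B -> bool).
Local Notation e := (inc_graph inc).
Local Notation V := (P + B)%type.

Definition side (u : V) : bool := if u is inr _ then true else false.

Lemma e_side u w : e u w -> side w = ~~ side u.
Proof. by case: u => [p|C]; case: w => [q|C'] //=. Qed.

Lemma reach_parity n (u w : V) : reach e n u w -> odd n = (side u != side w).
Proof.
elim: n u => [|n IH] u /=; first by move/eqP->; rewrite eqxx.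
case/existsP=> z /andP[ezu /IH ->]; rewrite (e_side ezu).
by case: (side u); case: (side w).
Qed.

Lemma reach_par_neg n (u w : V) : odd n != (side u != side w) -> ~~ reach e n u w.
Proof. by move=> H; apply/negP => Hr; move: H; rewrite (reach_parity Hr) eqxx. Qed.

Lemma reach_Gam n (u w : V) : reach e n u w -> exists2 i, i <= n & w \in Gam e i u.
Proof.
move=> H.
have ex : exists i, reach e i u w by exists n.
case: (ex_minnP ex) => m Hm Hmin.
exists m; first exact: Hmin.
rewrite inE Hm /=; apply/forallP => j; apply/negP => Hj.
by have := Hmin _ Hj; rewrite leqNgt ltn_ord.
Qed.

Lemma Gam_reach i (u w : V) : w \in Gam e i u -> reach e i u w.
Proof. by rewrite inE => /andP[]. Qed.

Lemma Gam_not i j (u w : V) : w \in Gam e i u -> j < i -> ~~ reach e j u w.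
Proof. by rewrite inE => /andP[_ /forallP H] ji; exact: (H (Ordinal ji)). Qed.

Lemma GamP i (u w : V) : reach e i u w -> (forall j, j < i -> ~~ reach e j u w) ->
  w \in Gam e i u.
Proof. by move=> H1 H2; rewrite inE H1 /=; apply/forallP => j; apply: H2. Qed.

Lemma reach1 (u w : V) : reach e 1 u w = e u w.
Proof.
apply/existsP/idP => [[z /andP[H /eqP <-]] //|H]; by exists w; rewrite H eqxx.
Qed.

Lemma Gam1 (u w : V) : (w \in Gam e 1 u) = e u w.
Proof.
apply/idP/idP => [/Gam_reach|H]; first by rewrite reach1.
apply: GamP; first by rewrite reach1.
case=> // _ /=; apply/negP => /eqP Hu; move: H; rewrite Hu.
by case: w {Hu}.
Qed.

Lemma Gam0 (u w : V) : (w \in Gam e 0 u) = (w == u).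
Proof. by rewrite inE /= eq_sym; case: eqP => //= _; apply/forallP; case. Qed.

Lemma reach2pp p q : reach e 2 (inl p) (inl q) -> exists C, inc p C && inc q C.
Proof.
case/existsP => [[p'|C]] //= /andP[H /existsP[[q'|C']]] //=.
by case/andP=> H2 /eqP[<-]; exists C; rewrite H.
Qed.

Lemma reach2bb C C' : reach e 2 (inr C) (inr C') -> exists q, inc q C && inc q C'.
Proof.
case/existsP => [[p'|C0]] //= /andP[H /existsP[[q'|C1]]] //=.
by case/andP=> H2 /eqP[<-]; exists p'; rewrite H.
Qed.

Ltac closej := move=> [|[|[|[|[|]]]]] // _;
  try (apply: reach_par_neg; done); rewrite ?reach1 /=; try done.

Lemma Gam2pp p q C : p != q -> inc p C -> inc q C -> inl q \in Gam e 2 (inl p).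
Proof.
move=> pq pC qC; apply: GamP.
  by apply/existsP; exists (inr C); rewrite /= pC; apply/existsP; exists (inl q); rewrite /= qC eqxx.
closej.
Qed.

Lemma Gam2bb C C' q : C != C' -> inc q C -> inc q C' -> inr C' \in Gam e 2 (inr C).
Proof.
move=> pq pC qC; apply: GamP.
  by apply/existsP; exists (inl q); rewrite /= pC; apply/existsP; exists (inr C'); rewrite /= qC eqxx.
closej.
Qed.

Lemma Gam3pb p C q C' : ~~ inc p C -> inc p C' -> inc q C' -> inc q C ->
  inr C \in Gam e 3 (inl p).
Proof.
move=> npC pC' qC' qC; apply: GamP.
  apply/existsP; exists (inr C'); rewrite /= pC'; apply/existsP; exists (inl q).
  by rewrite /= qC'; apply/existsP; exists (inr C); rewrite /= qC eqxx.
closej.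
Qed.

Lemma Gam4pp p q L y N : (forall C, ~~ (inc p C && inc q C)) -> p != q ->
  inc p L -> inc y L -> inc y N -> inc q N -> inl q \in Gam e 4 (inl p).
Proof.
move=> nc pq pL yL yN qN; apply: GamP.
  apply/existsP; exists (inr L); rewrite /= pL; apply/existsP; exists (inl y).
  rewrite /= yL; apply/existsP; exists (inr N); rewrite /= yN.
  by apply/existsP; exists (inl q); rewrite /= qN eqxx.
closej.
by apply/negP => /reach2pp [C]; apply/negP.
Qed.

Lemma Gam2_inl p y : y \in Gam e 2 (inl p) -> exists q, y = inl q.
Proof. case: y => [q|C]; first by exists q. by move/Gam_reach/reach_parity. Qed.
End G.

Section D.
Variables (P B : finType) (inc : P -> B -> bool) (v b r k l1 t : nat).
Hypothesis HS : is_SPBIBD inc v b r k l1 0 (k - 1) t.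
Hypothesis HQ : quasi_symmetric inc 0 1.
Hypothesis Hk : 3 <= k.

Lemma blk_card C : #|[set p | inc p C]| = k.
Proof. by case: HS => [[_ _ H _ _] _ _ _]. Qed.

Lemma pt_card p : #|[set C | inc p C]| = r.
Proof. by case: HS => [[_ _ _ H _] _ _ _]. Qed.

Lemma uniq_blk p q C1 C2 : p != q -> inc p C1 -> inc q C1 -> inc p C2 -> inc q C2 -> C1 = C2.
Proof.
move=> pq p1 q1 p2 q2; apply/eqP; apply/negPn/negP => ne.
case: HQ => _ Hx _ _.
have H2 : #|[set p; q]| <= bmeet inc C1 C2.
  rewrite /bmeet; apply: subset_leq_card.
  by apply/subsetP => z; rewrite !inE => /orP[/eqP->|/eqP->]; apply/andP.
rewrite cards2 pq in H2.
by case: (Hx C1 C2 ne) => E; rewrite E in H2.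
Qed.

Lemma other_point C (x y : P) : exists w, [&& inc w C, w != x & w != y].
Proof.
have : ~~ ([set p | inc p C] \subset [set x; y]).
  apply/negP => /subset_leq_card; rewrite blk_card cards2 => H.
  have : (x != y).+1 <= 2 by case: (x != y).
  lia.
case/subsetPn => w; rewrite !inE => wC /norP[wx wy]; exists w; by rewrite wC wx wy.
Qed.

Lemma meet1 : exists B1 B2 p0, [/\ B1 != B2, inc p0 B1, inc p0 B2 & bmeet inc B1 B2 = 1].
Proof.
case: HQ => _ _ _ [B1 [B2 [ne E]]].
have : 0 < bmeet inc B1 B2 by rewrite E.
case/card_gt0P => p0; rewrite inE => /andP[h1 h2].
by exists B1, B2, p0.
Qed.

Lemma r2 : 2 <= r.
Proof.
case: meet1 => B1 [B2 [p0 [ne h1 h2 _]]].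
rewrite -(pt_card p0).
have : #|[set B1; B2]| <= #|[set C | inc p0 C]|.
  by apply: subset_leq_card; apply/subsetP => z; rewrite !inE => /orP[/eqP->|/eqP->].
by rewrite cards2 ne.
Qed.

Lemma other_block x L : exists M, inc x M && (M != L).
Proof.
have : ~~ ([set C | inc x C] \subset [set L]).
  apply/negP => /subset_leq_card; rewrite pt_card cards1 => H.
  have := r2; lia.
case/subsetPn => M; rewrite !inE => xM ML; exists M; by rewrite xM ML.
Qed.

Lemma some_block p : exists C, inc p C.
Proof. by case: meet1 => B1 _; case: (other_block p B1) => C /andP[h _]; exists C. Qed.

Lemma coll_all q q' C : inc q C -> inc q' C -> q' != q -> lam inc q q' = l1.
Proof.
move=> qC q'C ne.
case: HS => _ _ Hs _.
have HsC := Hs q C qC.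
have HT : #|[set p | inc p C] :\ q| = k - 1.
  have := cardsD1 q [set p | inc p C]; rewrite blk_card inE qC /=; lia.
have sub : [set q0 | [&& inc q0 C, q0 != q & lam inc q q0 == l1]] \subset [set p | inc p C] :\ q.
  by apply/subsetP => z; rewrite !inE => /and3P[-> -> _].
have := subset_cardP (etrans HsC (esym HT)) sub => /(_ q') E.
have : q' \in [set q0 | [&& inc q0 C, q0 != q & lam inc q q0 == l1]] by rewrite E !inE q'C ne.
by rewrite inE => /and3P[_ _ /eqP].
Qed.

Lemma lam_pos p q : 0 < lam inc p q -> exists C, inc p C && inc q C.
Proof. by case/card_gt0P => C; rewrite inE => H; exists C. Qed.

Lemma lam_ge p q C : inc p C -> inc q C -> 0 < lam inc p q.
Proof. by move=> h1 h2; apply/card_gt0P; exists C; rewrite inE h1 h2. Qed.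

Lemma t_l1_pos : 0 < t /\ 0 < l1.
Proof.
case: meet1 => B1 [B2 [p0 [ne h1 h2 E]]].
have : ~~ ([set p | inc p B2] \subset [set p | inc p B1]).
  apply/negP => sub.
  have : [set p | inc p B2] \subset [set p | inc p B1 && inc p B2].
    by apply/subsetP => z; rewrite !inE => hz; rewrite hz andbT; move/subsetP: sub => /(_ z); rewrite !inE; apply.
  move/subset_leq_card; rewrite blk_card -/(bmeet inc B1 B2) E; lia.
case/subsetPn => q; rewrite !inE => qB2 qB1.
have qp0 : p0 != q by apply: contraNneq qB1 => <-.
have El := coll_all qB2 h2 qp0.
have l1p : 0 < l1 by rewrite -El; apply: (lam_ge qB2 h2).
split => //.
case: HS => _ _ _ Ht; rewrite -(Ht q B1 qB1); apply/card_gt0P; exists p0.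
by rewrite inE h1 El eqxx.
Qed.

Lemma nonflag_coll p C : ~~ inc p C -> exists q C', [&& inc q C, inc p C' & inc q C'].
Proof.
move=> npC; case: t_l1_pos => tp lp.
case: HS => _ _ _ Ht.
have : 0 < #|[set q | inc q C && (lam inc p q == l1)]| by rewrite Ht.
case/card_gt0P => q; rewrite inE => /andP[qC /eqP El].
have : 0 < lam inc p q by rewrite El.
case/lam_pos => C' /andP[h1 h2]; exists q, C'; by rewrite qC h1 h2.
Qed.


Local Notation e := (inc_graph inc).
Local Notation Y := (point_vertices P B).

Definition tri := exists x y z L C1 C2, x != y /\ inc x L /\ inc y L /\ ~~ inc z L /\
  inc x C1 /\ inc z C1 /\ inc y C2 /\ inc z C2.

Lemma cnt_i2 x y z L : x != y -> inc x L -> inc y L ->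
  #|nbr e (inl x) :&: nbr e (inl y) :&: Gam e 1 (inl z)| = inc z L.
Proof.
move=> xy xL yL.
have -> : nbr e (inl x) :&: nbr e (inl y) :&: Gam e 1 (inl z) =
    if inc z L then [set inr L] else set0.
  apply/setP => u; rewrite !in_setI Gam1 !inE; case: u => [q|C] /=.
    case: (inc z L); rewrite ?inE //; apply/esym/negbTE/eqP; discriminate.
  case zL: (inc z L); rewrite !inE.
    apply/idP/idP => [/andP[/andP[xC yC] zC]|/eqP[->]]; last by rewrite xL yL zL.
    by rewrite (uniq_blk xy xC yC xL yL).
  apply/negP => /andP[/andP[xC yC] zC]; by rewrite (uniq_blk xy xC yC xL yL) zL in zC.
by case: (inc z L); rewrite ?cards1 ?cards0.
Qed.

Lemma cnt_i3_pos x y Z L w : inc x L -> inc y L -> inc w L -> inc w Z -> Z != L ->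
  0 < #|nbr e (inl x) :&: nbr e (inl y) :&: Gam e 2 (inr Z)|.
Proof.
move=> xL yL wL wZ ZL; apply/card_gt0P; exists (inr L).
have G2 : inr L \in Gam e 2 (inr Z) by apply: (Gam2bb (q := w)).
by rewrite in_setI G2 andbT !inE /= xL yL.
Qed.

Lemma cnt_i3_zero x y N L : x != y -> inc x L -> inc y L ->
  (forall u, inc u N -> inc u L -> False) ->
  #|nbr e (inl x) :&: nbr e (inl y) :&: Gam e 2 (inr N)| = 0.
Proof.
move=> xy xL yL disj; apply/eqP; rewrite cards_eq0; apply/eqP/setP => u.
rewrite !in_setI in_set0; case: u => [q|C]; first by rewrite {1}inE.
apply/negP => /andP[/andP[xC yC] /Gam_reach/reach2bb [u' /andP[h1 h2]]].
rewrite inE /= in xC; rewrite inE /= in yC.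
rewrite (uniq_blk xy xC yC xL yL) in h2; exact: (disj u').
Qed.

Lemma Gam2pp_inv p q : inl q \in Gam e 2 (inl p) -> p != q /\ exists C, inc p C && inc q C.
Proof.
move=> h; split; last by apply: reach2pp; exact: Gam_reach h.
by move: (Gam_not h (isT : 0 < 2)) => /=; apply: contra => /eqP->.
Qed.

Lemma inY p : inl p \in Y.
Proof. by rewrite inE. Qed.

Lemma tri_bad m : 2 <= m -> hom_cond e Y m -> ~ tri.
Proof.
move=> m2 H [x [y [z [L [C1 [C2 [xy [xL [yL [zL [xC1 [zC1 [yC2 zC2]]]]]]]]]]]]].
have [c Hc] := H 2 m2.
case: (other_point L x y) => w /and3P[wL wx wy].
have xz : x != z by apply/eqP => E; rewrite -E xL in zL.
have yz : y != z by apply/eqP => E; rewrite -E yL in zL.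
have xw : x != w by rewrite eq_sym.
have yw : y != w by rewrite eq_sym.
have h1 := Hc (inl x) (inl y) (inl w) (inY x) (Gam2pp xy xL yL)
  (Gam2pp xw xL wL) (Gam2pp yw yL wL).
have h2 := Hc (inl x) (inl y) (inl z) (inY x) (Gam2pp xy xL yL)
  (Gam2pp xz xC1 zC1) (Gam2pp yz yC2 zC2).
rewrite /= (cnt_i2 _ xy xL yL) in h1; rewrite /= (cnt_i2 _ xy xL yL) in h2.
by move: h1 h2; rewrite wL (negbTE zL) => <-.
Qed.

Lemma noTri_GQ : ~ tri -> is_GQ inc v b r k.
Proof.
move=> nt; have HD : is_design inc v b r k by case: HS.
split => //.
- move=> p q pq; apply/card_le1_eqP => C1 C2; rewrite !inE => /andP[p1 q1] /andP[p2 q2].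
  exact: (uniq_blk pq p2 q2 p1 q1).
- by have := r2; lia.
- by lia.
move=> p B0 npB0; apply/eqP; rewrite eqn_leq; apply/andP; split.
  apply/card_le1_eqP => C1 C2; rewrite !inE.
  move=> /andP[pC1 /existsP[q1 /andP[q1C1 q1B0]]] /andP[pC2 /existsP[q2 /andP[q2C2 q2B0]]].
  have pq1 : p != q1 by apply/eqP => E; rewrite E q1B0 in npB0.
  case: (eqVneq q1 q2) => [E|q12].
    by rewrite -E in q2C2; exact: (uniq_blk pq1 pC2 q2C2 pC1 q1C1).
  exfalso; apply: nt; exists q1, q2, p, B0, C1, C2; do !split => //.
case: (nonflag_coll npB0) => q [C' /and3P[qB0 pC' qC']].
apply/card_gt0P; exists C'; rewrite inE pC' /=; apply/existsP; exists q; by rewrite qC' qB0.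
Qed.

Lemma GQ_noTri : is_GQ inc v b r k -> ~ tri.
Proof.
case=> _ _ _ _ Hn [x [y [z [L [C1 [C2 [xy [xL [yL [zL [xC1 [zC1 [yC2 zC2]]]]]]]]]]]]].
have C12 : C1 != C2.
  apply/eqP => E; rewrite -E in yC2.
  by rewrite -(uniq_blk xy xC1 yC2 xL yL) zC1 in zL.
have := Hn z L zL.
have : #|[set C1; C2]| <= #|[set B1 | inc z B1 && [exists q, inc q B1 && inc q L]]|.
  apply: subset_leq_card; apply/subsetP => u; rewrite !inE => /orP[] /eqP ->.
    by rewrite zC1 /=; apply/existsP; exists x; rewrite xC1 xL.
  by rewrite zC2 /=; apply/existsP; exists y; rewrite yC2 yL.
by rewrite cards2 C12 => H E; rewrite E in H.
Qed.

Lemma reach_cons n (u z w : P + B) : e u z -> reach e n z w -> reach e n.+1 u w.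
Proof. by move=> h1 h2; apply/existsP; exists z; apply/andP. Qed.

Lemma reach0 (u : P + B) : reach e 0 u u.
Proof. by rewrite /= eqxx. Qed.

Lemma GQ_almost : is_GQ inc v b r k -> almost_2_hom e Y.
Proof.
move=> GQ; have nt := GQ_noTri GQ.
exists 4; split => //; split.
  move=> [p|C]; last by rewrite inE. move=> _; split.
    move=> w.
    suff [n hn /reach_Gam [i hi hG]] : exists2 n, n <= 4 & reach e n (inl p) w.
      by exists i => //; apply: leq_trans hn.
    case: w => [q|C].
      case: (eqVneq p q) => [<-|pq]; first by exists 0 => //; apply: reach0.
      case: (some_block q) => C qC.
      case pC: (inc p C).
        exists 2 => //; apply: (reach_cons (z := inr C)) => //.
        by apply: (reach_cons (z := inl q)) => //; apply: reach0.
      case: (nonflag_coll (negbT pC)) => q' [C' /and3P[q'C pC' q'C']].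
      exists 4 => //; apply: (reach_cons (z := inr C')) => //.
      apply: (reach_cons (z := inl q')) => //; apply: (reach_cons (z := inr C)) => //.
      by apply: (reach_cons (z := inl q)) => //; apply: reach0.
    case pC: (inc p C).
      by exists 1 => //; apply: (reach_cons (z := inr C)) => //; apply: reach0.
    case: (nonflag_coll (negbT pC)) => q' [C' /and3P[q'C pC' q'C']].
    exists 3 => //; apply: (reach_cons (z := inr C')) => //.
    apply: (reach_cons (z := inl q')) => //; apply: (reach_cons (z := inr C)) => //.
    exact: reach0.
  case: (some_block p) => L pL.
  case: (other_point L p p) => y /and3P[yL yp _].
  case: (other_block y L) => N /andP[yN NL].
  case: (other_point N y y) => z /and3P[zN zy _].
  have zL : ~~ inc z L.
    by apply/negP => zL; move/negP: NL; apply; apply/eqP; exact: (uniq_blk zy zN yN zL yL).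
  have pz : p != z by apply/eqP => E; rewrite -E pL in zL.
  exists (inl z); apply: (Gam4pp (L := L) (y := y) (N := N)) => //.
  move=> C; apply/negP => /andP[pC zC]; apply: nt.
  exists p, y, z, L, C, N; do !split => //; by rewrite eq_sym.
move=> i /andP[]; case: i => [|[|[|]]] // _ _.
  exists 1 => x y z _ _; rewrite !Gam1 => hx hy.
  have -> : nbr e x :&: nbr e y :&: Gam e 0 z = [set z].
    apply/setP => u; rewrite !in_setI Gam0 !inE; case: eqP => [->|]; last by rewrite andbF.
    by rewrite hx hy.
  exact: cards1.
exists 1 => x y z; case: x => [p|C]; last by rewrite inE. move=> _ hy hz1 hz2.
case: (Gam2_inl hy) => q Eq; subst y.
case: (Gam2_inl hz1) => w Ew; subst z.
case: (Gam2pp_inv hy) => pq [L /andP[pL qL]].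
case: (Gam2pp_inv hz1) => pw [C1 /andP[pC1 wC1]].
case: (Gam2pp_inv hz2) => qw [C2 /andP[qC2 wC2]].
rewrite /= (cnt_i2 _ pq pL qL).
case wL: (inc w L) => //; exfalso; apply: nt.
exists p, q, w, L, C1, C2; do !split => //; by rewrite wL.
Qed.

Lemma almost_GQ : (exists p q : P, p != q /\ lam inc p q = 0) ->
  almost_2_hom e Y -> is_GQ inc v b r k.
Proof.
move=> [p0 [q0 [pq0 l0]]] [D [D3 [ecc hom]]].
have D4 : 4 <= D.
  case: (ecc _ (inY p0)) => /(_ (inl q0)) [i iD hi] _.
  case: i iD hi => [|[|[|[|i]]]] iD hi.
  - by rewrite Gam0 in hi; move/eqP: hi => [E]; rewrite E eqxx in pq0.
  - by rewrite Gam1 in hi.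
  - case/Gam_reach/reach2pp: hi => C /andP[h1 h2].
    by have := lam_ge h1 h2; rewrite l0.
  - by move/Gam_reach/reach_parity: hi.
  - by apply: leq_trans iD.
apply: noTri_GQ; apply: (tri_bad (m := D - 2)) => //; lia.
Qed.

Lemma not_two_hom : ~ two_hom e Y.
Proof.
move=> [D [D3 [ecc hom]]].
have nt : ~ tri by apply: (tri_bad (m := D - 1)) => //; lia.
case: meet1 => L [B2 [x [_ xL _ _]]].
case: (other_point L x x) => y /and3P[yL yx _].
have xy : x != y by rewrite eq_sym.
have D4 : 4 <= D.
  rewrite ltnNge; apply/negP => D3'.
  have HD : is_design inc v b r k by case: HS.
  case: HD => cP _ _ _ [kv _].
  have : ~~ ([set: P] \subset [set p | inc p L]).
    apply/negP => /subset_leq_card; rewrite cardsT blk_card cP; lia.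
  case/subsetPn => z _; rewrite inE => zL.
  have coll : forall a, inc a L -> exists C, inc a C && inc z C.
    move=> a aL; case: (ecc _ (inY a)) => /(_ (inl z)) [i iD hi] _.
    case: i iD hi => [|[|[|[|i]]]] iD hi.
    - by rewrite Gam0 in hi; move/eqP: hi => [E]; rewrite E aL in zL.
    - by rewrite Gam1 in hi.
    - by case/Gam_reach/reach2pp: hi => C h; exists C.
    - by move/Gam_reach/reach_parity: hi.
    - lia.
  case: (coll x xL) => C1 /andP[h1 h2]; case: (coll y yL) => C2 /andP[h3 h4].
  by apply: nt; exists x, y, z, L, C1, C2; do !split.
have [c Hc] := hom 3 (ltac:(apply/andP; split => //; lia)).
case: (other_point L x y) => w /and3P[wL wx wy].
case: (other_block w L) => Z /andP[wZ ZL].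
case: (other_block x L) => M /andP[xM ML].
case: (other_point M x x) => m /and3P[mM mx _].
case: (other_block m M) => N /andP[mN NM].
have xm : x != m by rewrite eq_sym.
have mL : ~~ inc m L.
  by apply/negP => mL; move/negP: ML; apply; apply/eqP; exact: (uniq_blk xm xM mM xL mL).
have disj : forall u, inc u N -> inc u L -> False.
  move=> u uN uL; case: (eqVneq x u) => [E|xu].
    by rewrite -E in uN; move/negP: NM; apply; apply/eqP; exact: (uniq_blk xm uN mN xM mM).
  by apply: nt; exists x, u, m, L, M, N; do !split.
have xw : x != w by rewrite eq_sym.
have yw : y != w by rewrite eq_sym.
have xZ : ~~ inc x Z.
  by apply/negP => xZ; move/negP: ZL; apply; apply/eqP; exact: (uniq_blk xw xZ wZ xL wL).
have yZ : ~~ inc y Z.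
  by apply/negP => yZ; move/negP: ZL; apply; apply/eqP; exact: (uniq_blk yw yZ wZ yL wL).
have xN : ~~ inc x N by apply/negP => h; exact: (disj x).
have yN : ~~ inc y N by apply/negP => h; exact: (disj y).
case: (nonflag_coll yN) => q [C' /and3P[qN yC' qC']].
have hZ := Hc (inl x) (inl y) (inr Z) (inY x) (Gam2pp xy xL yL)
  (Gam3pb xZ xL wL wZ) (Gam3pb yZ yL wL wZ).
have hN := Hc (inl x) (inl y) (inr N) (inY x) (Gam2pp xy xL yL)
  (Gam3pb xN xM mM mN) (Gam3pb yN yC' qC' qN).
have := cnt_i3_pos xL yL wL wZ ZL; rewrite /= in hZ hN.
by rewrite hZ -hN (cnt_i3_zero xy xL yL disj).
Qed.

End D.

Theorem proposition4p8 (P B : finType) (inc : P -> B -> bool)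
    (v b r k l1 t : nat) :
  is_SPBIBD inc v b r k l1 0 (k - 1) t ->
  quasi_symmetric inc 0 1 ->
  3 <= k ->
  ( ((exists p q : P, p != q /\ lam inc p q = l1) /\
     (exists p q : P, p != q /\ lam inc p q = 0)) ->
    (almost_2_hom (inc_graph inc) (point_vertices P B) <-> is_GQ inc v b r k) )
  /\ ~ two_hom (inc_graph inc) (point_vertices P B).
Proof.
move=> HS HQ Hk; split; last exact: not_two_hom HS HQ Hk.
move=> [_ H0]; split; first exact: almost_GQ HS HQ Hk H0.
exact: GQ_almost HS HQ Hk.
Qed.
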